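(* Consider the class of three-valued logics (as defined in the context) that are paraconsistent and have properties (a) and (b). There is exactly one logic in this class whose logical equivalence relation $\equiv$ satisfies, for all formulas $A,B,C$, all of the following: (1) $A\wedge\bot \equiv \bot$; (2) $A\vee\top\equiv\top$; (3) $A\wedge\top\equiv A$; (4) $A\vee\bot\equiv A$; (5) $A\wedge A\equiv A$; (6) $A\vee A\equiv A$; (7) $A\wedge B\equiv B\wedge A$; (8) $A\vee B\equiv B\vee A$; (9) $\neg\neg A\equiv A$; (10) $(A\vee\neg A)\to B\equiv B$; (11) $(A\to B)\wedge(A\to C)\equiv A\to(B\wedge C)$; (12) $(A\to C)\wedge(B\to C)\equiv (A\vee B)\to C$.
   Context: Formulas are built from a countably infinite set of propositional variables, the constant $\bot$, the unary connective $\neg$ and the binary connectives $\wedge,\vee,\to$; $\top$ abbreviates $\neg\bot$. Let $V=\{t,f,b\}$. A three-valued logic is specified by truth functions $\neg^M:V\to V$ and $\wedge^M,\vee^M,\to^M:V^2\to V$ that agree with the classical truth functions of negation, conjunction, disjunction and material implication on $\{t,f\}$, with $\bot$ interpreted as $f$; two logics are different iff at least one of these truth functions differs. A valuation is a map $\nu$ from formulas to $V$ with $\nu(\bot)=f$, $\nu(\neg A)=\neg^M(\nu(A))$, $\nu(A\wedge B)=\wedge^M(\nu(A),\nu(B))$, and similarly for $\vee,\to$ (values on propositional variables are arbitrary). The designated values are $t$ and $b$: $\Gamma\models A$ iff for every valuation $\nu$, either $\nu(A')=f$ for some $A'\in\Gamma$ or $\nu(A)\in\{t,b\}$. The logic is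 paraconsistent if there are formulas $A,B$ with $\{A,\neg A\}\not\models B$. Its logical equivalence relation is: $A\equiv B$ iff $\nu(A)=\nu(B)$ for every valuation $\nu$. Property (a): for every set of formulas $\Gamma$ and formula $A$, $\Gamma\models A$ implies $\Gamma\models_{\mathrm{CPL}}A$, where $\models_{\mathrm{CPL}}$ is the consequence relation of classical propositional logic (with $\bot$ false, $\to$ material implication). Property (b): for all sets $\Gamma$ and formulas $A,B,C$: (b1) $\Gamma\cup\{A\}\models B$ iff $\Gamma\models A\to B$; (b2) $\Gamma\models A\wedge B$ iff $\Gamma\models A$ and $\Gamma\models B$; (b3) $\Gamma\cup\{A\vee B\}\models C$ iff $\Gamma\cup\{A\}\models C$ and $\Gamma\cup\{B\}\models C$. (Under these conventions there are exactly 8192 such paraconsistent logics with properties (a) and (b).) *)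

(* Defs.v *)
Inductive form : Type :=
| Var : nat -> form
| Bot : form
| Neg : form -> form
| And : form -> form -> form
| Or  : form -> form -> form
| Imp : form -> form -> form.

Definition Top : form := Neg Bot.

Inductive V : Type := vt | vf | vb.

Record logic : Type := mkLogic {
  negM : V -> V;
  andM : V -> V -> V;
  orM  : V -> V -> V;
  impM : V -> V -> V
}.

Definition is_classical_bool (b : bool) : V := if b then vt else vf.

Definition classical_on_tf (L : logic) : Prop :=
  negM L vt = vf /\ negM L vf = vt /\
  (forall x y : bool,
      andM L (is_classical_bool x) (is_classical_bool y) = is_classical_bool (x && y) /\
      orM  L (is_classical_bool x) (is_classical_bool y) = is_classical_bool (x || y) /\
      impM L (is_classical_bool x) (is_classical_bool y) = is_classical_bool (implb x y)).

Definition same_logic (L L' : logic) : Prop :=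
  (forall x, negM L x = negM L' x) /\
  (forall x y, andM L x y = andM L' x y) /\
  (forall x y, orM L x y = orM L' x y) /\
  (forall x y, impM L x y = impM L' x y).

Definition is_valuation (L : logic) (nu : form -> V) : Prop :=
  nu Bot = vf /\
  (forall A, nu (Neg A) = negM L (nu A)) /\
  (forall A B, nu (And A B) = andM L (nu A) (nu B)) /\
  (forall A B, nu (Or A B) = orM L (nu A) (nu B)) /\
  (forall A B, nu (Imp A B) = impM L (nu A) (nu B)).

Definition designated (x : V) : Prop := x = vt \/ x = vb.

Definition fset := form -> Prop.

Definition entails (L : logic) (G : fset) (A : form) : Prop :=
  forall nu, is_valuation L nu ->
    (exists A', G A' /\ nu A' = vf) \/ designated (nu A).

Definition add (G : fset) (A : form) : fset := fun X => G X \/ X = A.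

Fixpoint ceval (v : nat -> bool) (A : form) : bool :=
  match A with
  | Var n => v n
  | Bot => false
  | Neg A => negb (ceval v A)
  | And A B => ceval v A && ceval v B
  | Or A B => ceval v A || ceval v B
  | Imp A B => implb (ceval v A) (ceval v B)
  end.

Definition entails_CPL (G : fset) (A : form) : Prop :=
  forall v, (forall A', G A' -> ceval v A' = true) -> ceval v A = true.

Definition paraconsistent (L : logic) : Prop :=
  exists A B, ~ entails L (fun X => X = A \/ X = Neg A) B.

Definition property_a (L : logic) : Prop :=
  forall G A, entails L G A -> entails_CPL G A.

Definition property_b (L : logic) : Prop :=
  (forall G A B, entails L (add G A) B <-> entails L G (Imp A B)) /\
  (forall G A B, entails L G (And A B) <-> (entails L G A /\ entails L G B)) /\
  (forall G A B C, entails L (add G (Or A B)) C <->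
                   (entails L (add G A) C /\ entails L (add G B) C)).

Definition in_class (L : logic) : Prop :=
  classical_on_tf L /\ paraconsistent L /\ property_a L /\ property_b L.

Definition equiv (L : logic) (A B : form) : Prop :=
  forall nu, is_valuation L nu -> nu A = nu B.

Definition satisfies_laws (L : logic) : Prop :=
  forall A B C : form,
    equiv L (And A Bot) Bot /\
    equiv L (Or A Top) Top /\
    equiv L (And A Top) A /\
    equiv L (Or A Bot) A /\
    equiv L (And A A) A /\
    equiv L (Or A A) A /\
    equiv L (And A B) (And B A) /\
    equiv L (Or A B) (Or B A) /\
    equiv L (Neg (Neg A)) A /\
    equiv L (Imp (Or A (Neg A)) B) B /\
    equiv L (And (Imp A B) (Imp A C)) (Imp A (And B C)) /\
    equiv L (And (Imp A C) (Imp B C)) (Imp (Or A B) C).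

(* Main.v *)
Require Import Defs.

Fixpoint eval (L : logic) (v : nat -> V) (A : form) : V :=
  match A with
  | Var n => v n
  | Bot => vf
  | Neg A => negM L (eval L v A)
  | And A B => andM L (eval L v A) (eval L v B)
  | Or A B => orM L (eval L v A) (eval L v B)
  | Imp A B => impM L (eval L v A) (eval L v B)
  end.

Lemma eval_val L v : is_valuation L (eval L v).
Proof. repeat split; intros; reflexivity. Qed.

Definition env (x y z : V) (n : nat) : V :=
  match n with 0 => x | 1 => y | _ => z end.

Definition neg0 (x : V) : V := match x with vt => vf | vf => vt | vb => vb end.
Definition and0 (x y : V) : V :=
  match x, y with
  | vf, _ => vf | _, vf => vf | vt, vt => vt | _, _ => vb end.
Definition or0 (x y : V) : V :=
  match x, y with
  | vt, _ => vt | _, vt => vt | vf, vf => vf | _, _ => vb end.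
Definition imp0 (x y : V) : V := match x with vf => vt | _ => y end.

Definition L0 : logic := mkLogic neg0 and0 or0 imp0.

Lemma laws_vals L : satisfies_laws L -> forall x y z,
    andM L x vf = vf /\
    orM L x (negM L vf) = negM L vf /\
    andM L x (negM L vf) = x /\
    orM L x vf = x /\
    andM L x x = x /\
    orM L x x = x /\
    andM L x y = andM L y x /\
    orM L x y = orM L y x /\
    negM L (negM L x) = x /\
    impM L (orM L x (negM L x)) y = y /\
    andM L (impM L x y) (impM L x z) = impM L x (andM L y z) /\
    andM L (impM L x z) (impM L y z) = impM L (orM L x y) z.
Proof.
  intros H x y z.
  destruct (H (Var 0) (Var 1) (Var 2)) as
      (H1 & H2 & H3 & H4 & H5 & H6 & H7 & H8 & H9 & H10 & H11 & H12).
  pose proof (eval_val L (env x y z)) as Hv.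
  apply H1 in Hv as E1. apply H2 in Hv as E2. apply H3 in Hv as E3.
  apply H4 in Hv as E4. apply H5 in Hv as E5. apply H6 in Hv as E6.
  apply H7 in Hv as E7. apply H8 in Hv as E8. apply H9 in Hv as E9.
  apply H10 in Hv as E10. apply H11 in Hv as E11. apply H12 in Hv as E12.
  simpl in *. repeat split; assumption.
Qed.

Lemma val_eqs L nu : is_valuation L nu ->
  nu Bot = vf /\
  (forall A, nu (Neg A) = negM L (nu A)) /\
  (forall A B, nu (And A B) = andM L (nu A) (nu B)) /\
  (forall A B, nu (Or A B) = orM L (nu A) (nu B)) /\
  (forall A B, nu (Imp A B) = impM L (nu A) (nu B)).
Proof. auto. Qed.

Lemma eval_classical v A :
  eval L0 (fun n => is_classical_bool (v n)) A = is_classical_bool (ceval v A).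
Proof.
  induction A; simpl; try rewrite IHA; try rewrite IHA1, IHA2; try reflexivity;
  repeat match goal with |- context [ceval v ?X] => destruct (ceval v X) end;
  reflexivity.
Qed.

Ltac vsimp Hv :=
  let H0 := fresh in let HN := fresh in let HA := fresh in
  let HO := fresh in let HI := fresh in
  destruct (val_eqs _ _ Hv) as (H0 & HN & HA & HO & HI);
  repeat (rewrite ?H0, ?HN, ?HA, ?HO, ?HI in *).

Lemma L0_in_class : in_class L0.
Proof.
  split; [|split; [|split]].
  - repeat split; destruct x, y; reflexivity.
  - exists (Var 0), Bot. intro H.
    destruct (H (eval L0 (fun _ => vb)) (eval_val _ _)) as [[A' [[E|E] HA]]|[E|E]];
      subst; simpl in *; discriminate.
  - intros G A H v Hv.
    destruct (H _ (eval_val L0 (fun n => is_classical_bool (v n)))) as [[A' [HG HA]]|HD].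
    + rewrite eval_classical, (Hv A' HG) in HA. discriminate.
    + rewrite eval_classical in HD. destruct (ceval v A); auto.
      destruct HD; discriminate.
  - split; [|split].
    + intros G A B; split; intros H nu Hv; destruct (H nu Hv) as [[A' [HG HA]]|HD].
      * destruct HG as [HG|HG]; [left; eauto|subst].
        right. vsimp Hv. rewrite HA. left; reflexivity.
      * right. vsimp Hv. unfold designated in *. destruct (nu A); simpl; auto.
      * left; exists A'; split; [left|]; auto.
      * vsimp Hv. unfold designated in *. destruct (nu A) eqn:EA.
        -- right; exact HD.
        -- left; exists A; split; [right|]; auto.
        -- right; exact HD.
    + intros G A B; split.
      * intros H; split; intros nu Hv; destruct (H nu Hv) as [L|HD]; auto; right;
        vsimp Hv; unfold designated in *;
        destruct (nu A), (nu B); simpl in *; destruct HD; try discriminate; auto.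
      * intros [H1 H2] nu Hv.
        destruct (H1 nu Hv) as [L|HD1]; auto. destruct (H2 nu Hv) as [L|HD2]; auto.
        right; vsimp Hv; unfold designated in *.
        destruct HD1 as [E1|E1], HD2 as [E2|E2]; rewrite E1, E2; simpl; auto.
    + intros G A B C; split.
      * intros H; split; intros nu Hv; destruct (H nu Hv) as [[A' [[HG|HG] HA]]|HD];
          auto; try (left; exists A'; split; [left|]; now auto).
        -- subst. left. exists A. split; [right; reflexivity|].
           vsimp Hv. destruct (nu A), (nu B); simpl in *; try discriminate; auto.
        -- subst. left. exists B. split; [right; reflexivity|].
           vsimp Hv. destruct (nu A), (nu B); simpl in *; try discriminate; auto.
      * intros [H1 H2] nu Hv.
        destruct (H1 nu Hv) as [[A' [[HG|HG] HA]]|HD]; auto;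
          try (left; exists A'; split; [left|]; now auto).
        destruct (H2 nu Hv) as [[B' [[HG'|HG'] HB]]|HD]; auto;
          try (left; exists B'; split; [left|]; now auto).
        subst. left. exists (Or A B). split; [right; reflexivity|].
        vsimp Hv. rewrite HA, HB. reflexivity.
Qed.

Lemma L0_laws : satisfies_laws L0.
Proof.
  intros A B C.
  unfold Top; repeat split; intros nu Hv; vsimp Hv;
    destruct (nu A), (nu B), (nu C); reflexivity.
Qed.

Lemma unique_L L : in_class L -> satisfies_laws L -> same_logic L0 L.
Proof.
  intros [Hc [Hp _]] Hl.
  destruct Hc as [Nt [Nf Hc]].
  pose proof (laws_vals L Hl) as LV.
  assert (Att : andM L vt vt = vt) by apply (Hc true true).
  assert (Atf : andM L vt vf = vf) by apply (Hc true false).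
  assert (Aft : andM L vf vt = vf) by apply (Hc false true).
  assert (Aff : andM L vf vf = vf) by apply (Hc false false).
  assert (Ott : orM L vt vt = vt) by apply (Hc true true).
  assert (Otf : orM L vt vf = vt) by apply (Hc true false).
  assert (Oft : orM L vf vt = vt) by apply (Hc false true).
  assert (Off : orM L vf vf = vf) by apply (Hc false false).
  assert (Itt : impM L vt vt = vt) by apply (Hc true true).
  assert (Itf : impM L vt vf = vf) by apply (Hc true false).
  assert (Ift : impM L vf vt = vt) by apply (Hc false true).
  assert (Iff : impM L vf vf = vt) by apply (Hc false false).
  assert (Nb : negM L vb = vb).
  { destruct (LV vb vb vb) as (_&_&_&_&_&_&_&_&E&_).
    destruct (negM L vb) eqn:En; auto.
    - rewrite Nt in E; discriminate.
    - exfalso. destruct Hp as [A [B Hp]]. apply Hp. intros nu Hv. left.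
      vsimp Hv. destruct (nu A) eqn:EA.
      + exists (Neg A); split; [right; reflexivity|]. vsimp Hv. rewrite EA; auto.
      + exists A; split; [left; reflexivity|]; auto.
      + exists (Neg A); split; [right; reflexivity|]. vsimp Hv. rewrite EA; auto. }
  destruct (LV vb vt vt) as (Abf & Obt & Abt & Obf & Abb & Obb & Cbt & COb & _ & Ib & _).
  destruct (LV vb vf vt) as (_&_&_&_&_&_&Cbf & COf & _ & Ibf & _).
  destruct (LV vb vb vt) as (_&_&_&_&_&_&_&_&_&Ibb & _).
  destruct (LV vt vb vt) as (_&_&_&_&_&_&_&_&_&Itb & _).
  destruct (LV vf vf vb) as (_&_&_&_&_&_&_&_&_&_&I11&_).
  rewrite Nf in *. rewrite Nb in *. rewrite Nt in *.
  rewrite Obb in Ib, Ibf, Ibb. rewrite Otf in Itb.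
  assert (Ifb : impM L vf vb = vt).
  { rewrite Iff in I11.
    destruct (impM L vf vb) eqn:E; auto; congruence. }
  repeat split; intros; repeat match goal with x : V |- _ => destruct x end;
    simpl; congruence.
Qed.

Theorem theorem2 :
  exists L : logic,
    in_class L /\ satisfies_laws L /\
    forall L' : logic, in_class L' -> satisfies_laws L' -> same_logic L L'.
Proof.
  exists L0. split; [apply L0_in_class|]. split; [apply L0_laws|].
  apply unique_L.
Qed.
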